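(* Let $r\in\mathbb{N}$ and suppose $S_N$ admits the Edgeworth expansion of order $r$, i.e. there are polynomials $P_1,\dots,P_r$ with $\mathbb{P}\big(\frac{S_N-NA}{\sqrt N}\leq z\big)-\mathfrak{N}(z)=\sum_{p=1}^rN^{-p/2}P_p(z)\mathfrak{n}(z)+o(N^{-r/2})$ uniformly in $z\in\mathbb{R}$. Then for every $c\in(0,r)$ and every sequence $(x_N)$ with $1\leq x_N\leq\sqrt{c\sigma^2\ln N}$, $$\lim_{N\to\infty}\frac{1-\mathbb{P}\Big(\frac{S_N-AN}{\sqrt{N}}\leq x_N\Big)}{1-\mathfrak{N}(x_N)}=1.$$
   Context: $X_1,X_2,\dots$ are real random variables, $S_N=\sum_{n=1}^N X_n$, $A\in\mathbb{R}$, $\sigma^2>0$, $\mathfrak{n}(y)=\frac{1}{\sqrt{2\pi\sigma^2}}e^{-y^2/(2\sigma^2)}$, $\mathfrak{N}(z)=\int_{-\infty}^z\mathfrak{n}(y)\,dy$. *)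

(* Defs.v *)
From HB Require Import structures.
From mathcomp Require Import all_boot all_order all_algebra.
From mathcomp Require Import all_classical all_reals all_analysis.
Set Implicit Arguments. Unset Strict Implicit. Unset Printing Implicit Defensive.
Import Order.TTheory GRing.Theory Num.Theory.
Import numFieldNormedType.Exports.
Local Open Scope classical_set_scope.
Local Open Scope ring_scope.

Definition gauss_n {R : realType} (sigma2 : R) (y : R) : R :=
  (Num.sqrt (2 * pi * sigma2))^-1 * expR (- (y ^+ 2) / (2 * sigma2)).

Definition gauss_N {R : realType} (sigma2 : R) (z : R) : R :=
  fine (\int[@lebesgue_measure R]_(y in `]-oo, z]) (gauss_n sigma2 y)%:E)%E.

Definition partial_sum {d} {T : measurableType d} {R : realType}
  (X : nat -> T -> R) (N : nat) (w : T) : R :=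
  \sum_(1 <= n < N.+1) X n w.

Definition normalized_cdf {d} {T : measurableType d} {R : realType}
  (P : probability T R) (X : nat -> T -> R) (A : R) (N : nat) (z : R) : R :=
  fine (P [set w | (partial_sum X N w - N%:R * A) / Num.sqrt N%:R <= z]).

Definition has_edgeworth_expansion {d} {T : measurableType d} {R : realType}
  (P : probability T R) (X : nat -> T -> R) (A sigma2 : R) (r : nat)
  (Poly : nat -> {poly R}) : Prop :=
  forall eps : R, 0 < eps -> \forall N \near \oo, forall z : R,
    `| normalized_cdf P X A N z - gauss_N sigma2 z
       - \sum_(1 <= p < r.+1) (Num.sqrt (N%:R : R)) ^- p * (Poly p).[z] * gauss_n sigma2 z |
    <= eps * (Num.sqrt (N%:R : R)) ^- r.

(* Main.v *)
Require Import Defs.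
From HB Require Import structures.
From mathcomp Require Import all_boot all_order all_algebra.
From mathcomp Require Import all_classical all_reals all_analysis.
Import Order.TTheory GRing.Theory Num.Theory.
Import numFieldNormedType.Exports.
Local Open Scope classical_set_scope.
Local Open Scope ring_scope.

From mathcomp Require Import ring lra.
Lemma gauss_n_pdf (R : realType) (s2 : R) : 0 < s2 ->
  gauss_n s2 = normal_pdf 0 (Num.sqrt s2).
Proof.
move=> s0; rewrite normal_pdfE ?gt_eqF ?sqrtr_gt0 //.
apply/funext => y /=; rewrite /gauss_n /normal_peak /normal_fun subr0 sqr_sqrtr ?ltW //.
congr (_^-1 * expR _).
  congr Num.sqrt; rewrite -mulr_natr; ring.
congr (_ / _); rewrite -mulr_natl; ring.
Qed.

Lemma gauss_n_gt0 (R : realType) (s2 : R) y : 0 < s2 -> 0 < gauss_n s2 y.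
Proof.
move=> s0; rewrite /gauss_n mulr_gt0 ?expR_gt0 // invr_gt0 sqrtr_gt0.
by rewrite !mulr_gt0 ?pi_gt0.
Qed.

Lemma gauss_tail (R : realType) (s2 : R) z : 0 < s2 ->
  ((1 - gauss_N s2 z)%:E = normal_prob 0 (Num.sqrt s2) `]z, +oo[)%E.
Proof.
move=> s0.
have -> : gauss_N s2 z = fine (normal_prob 0 (Num.sqrt s2) `]-oo, z]).
  by rewrite /gauss_N /normal_prob gauss_n_pdf.
rewrite -setCitvl probability_setC //.
have h0 : (0 <= normal_prob 0 (Num.sqrt s2) `]-oo, z])%E by [].
have h1 : (normal_prob 0 (Num.sqrt s2) `]-oo, z] <= 1)%E by apply: probability_le1.
have hf : normal_prob 0 (Num.sqrt s2) `]-oo, z] \is a fin_num by rewrite ge0_fin_numE // (le_lt_trans h1) ?ltry.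
rewrite EFinB; congr (_ - _)%E; exact: fineK hf.
Qed.

Lemma gauss_tail_lb (R : realType) (s2 : R) z : 0 < s2 -> 1 <= z ->
  expR (- 3 / (2 * s2)) * gauss_n s2 z / z <= 1 - gauss_N s2 z.
Proof.
move=> s0 z1.
have z0 : 0 < z by apply: lt_le_trans z1.
have key : forall y : R, z < y -> y <= z + z^-1 -> -3 - z ^+ 2 <= - y ^+ 2.
  move=> y zy; set w := z^-1 => yz.
  have hw : z * w = 1 by rewrite mulfV ?gt_eqF.
  have w0 : 0 < w by rewrite invr_gt0.
  have w1 : w <= 1 by rewrite invr_le1 ?unitfE ?gt_eqF.
  have h1 : y ^+ 2 <= (z + w) ^+ 2.
    rewrite ler_pXn2r ?nnegrE //; last by rewrite addr_ge0 ?ltW.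
    by apply: ltW; apply: lt_trans zy.
  have h2 : w ^+ 2 <= 1 by nra.
  have h3 : (z + w) ^+ 2 = z ^+ 2 + 2 * (z * w) + w ^+ 2 by ring.
  rewrite hw in h3; lra.
rewrite -lee_fin gauss_tail //.
apply: (@le_trans _ _ (normal_prob 0 (Num.sqrt s2) `]z, z + z^-1])); last first.
  apply: le_measure; rewrite ?inE //.
  by move=> y /=; rewrite !in_itv /= andbT => /andP[].
rewrite /normal_prob -gauss_n_pdf //.
have -> : ((expR (- 3 / (2 * s2)) * gauss_n s2 z / z)%:E =
   \int[lebesgue_measure]_(y in `]z, (z + z^-1)%R]) (expR (- 3 / (2 * s2)) * gauss_n s2 z)%:E)%E.
  rewrite integral_cst //= lebesgue_measure_itv /= lte_fin ltrDl invr_gt0 z0.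
  by rewrite -EFinB -EFinM; congr EFin; rewrite addrAC subrr add0r.
apply: ge0_le_integral => //.
- by move=> y _; rewrite lee_fin mulr_ge0 ?expR_ge0 ?ltW ?gauss_n_gt0.
- apply/measurable_realfun.measurable_EFinP; rewrite gauss_n_pdf //.
  exact: measurable_funTS (measurable_normal_pdf _ _).
move=> y /=; rewrite in_itv /= => /andP[zy yz]; rewrite lee_fin /gauss_n.
rewrite mulrCA ler_pM2l; last by rewrite invr_gt0 sqrtr_gt0 !mulr_gt0 ?pi_gt0.
rewrite -expRD ler_expR -mulrDl ler_pM2r ?invr_gt0 ?mulr_gt0 //.
exact: key.
Qed.
Lemma part1 (R : realType) (s L Bp K0 x k : R) (M : nat) :
  0 < K0 -> 0 <= Bp -> 0 < k -> 1 <= L -> s = expR L -> 1 <= x -> x ^+ 2 <= k * L ->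
  s^-1 * Bp * x ^+ M / K0 <= Bp * k ^+ M * (M.+1)`!%:R / K0 / L.
Proof.
move=> K00 B0 k0 L1 sE x1 x2.
have L0 : 0 < L by apply: lt_le_trans L1.
have x0 : 0 <= x by apply: le_trans x1.
have xk : x <= k * L.
  apply: le_trans x2; rewrite expr2 ler_peMr //.
have xM : x ^+ M <= (k * L) ^+ M.
  case: M => [|M]; first by [].
  by rewrite ler_pXn2r ?nnegrE // mulr_ge0 ?ltW.
have fp : 0 < (M.+1)`!%:R :> R by rewrite ltr0n fact_gt0.
have sinv : s^-1 <= (M.+1)`!%:R / L ^+ M.+1.
  rewrite sE -[_ / _]invrK invf_div lef_pV2 ?posrE ?expR_gt0 ?divr_gt0 ?exprn_gt0 //.
  apply: le_trans (expR_ge1Dxn M (ltW L0)); rewrite lerDr //.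
have h : s^-1 * Bp * x ^+ M / K0 <= (M.+1)`!%:R / L ^+ M.+1 * Bp * (k * L) ^+ M / K0.
  rewrite ler_pM2r ?invr_gt0 //; apply: ler_pM => //.
  - by rewrite mulr_ge0 // sE invr_ge0 expR_ge0.
  - exact: exprn_ge0.
  - by rewrite ler_wpM2r.
apply: le_trans h _; rewrite le_eqVlt; apply/orP; left; apply/eqP.
rewrite exprMn exprSr; field.
by rewrite !gt_eqF ?exprn_gt0.
Qed.
Lemma part2 (R : realType) (s L K0 x s2 c : R) (r : nat) :
  0 < s2 -> 0 < c -> c < r%:R -> 0 < K0 -> 1 <= L -> s = expR L -> 1 <= x ->
  x ^+ 2 <= 2 * c * s2 * L ->
  x / (K0 * gauss_n s2 x) * s ^- r <=
    2 * c * s2 * Num.sqrt (2 * pi * s2) / (K0 * (r%:R - c)).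
Proof.
move=> s0 c0 cr K00 L1 sE x1 x2.
have L0 : 0 < L by apply: lt_le_trans L1.
have x0 : 0 <= x by apply: le_trans x1.
have xk : x <= 2 * c * s2 * L.
  apply: le_trans x2; rewrite expr2 ler_peMr //.
have d0 : 0 < r%:R - c by rewrite subr_gt0.
have sq0 : 0 < Num.sqrt (2 * pi * s2) by rewrite sqrtr_gt0 !mulr_gt0 ?pi_gt0.
have nxE : (gauss_n s2 x)^-1 = Num.sqrt (2 * pi * s2) * expR (x ^+ 2 / (2 * s2)).
  by rewrite /gauss_n invfM invrK mulNr expRN invrK.
have srE : s ^- r = expR (- (r%:R * L)) by rewrite expRN expRM_natl sE.
have e1 : expR (x ^+ 2 / (2 * s2)) <= expR (c * L).
  rewrite ler_expR ler_pdivrMr ?mulr_gt0 //; lra.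
have e2 : expR (c * L) * expR (- (r%:R * L)) <= ((r%:R - c) * L)^-1.
  rewrite -expRD (_ : c * L + - (r%:R * L) = - ((r%:R - c) * L)); last by ring.
  rewrite expRN lef_pV2 ?posrE ?expR_gt0 ?mulr_gt0 //.
  by apply: le_trans (expR_ge1Dx _) ; rewrite lerDr.
rewrite invfM nxE srE.
have -> : x * (K0^-1 * (Num.sqrt (2 * pi * s2) * expR (x ^+ 2 / (2 * s2)))) *
    expR (- (r%:R * L)) = (x * K0^-1 * Num.sqrt (2 * pi * s2)) *
    (expR (x ^+ 2 / (2 * s2)) * expR (- (r%:R * L))) by ring.
have A0 : 0 <= K0^-1 * Num.sqrt (2 * pi * s2) by rewrite mulr_ge0 ?invr_ge0 ?ltW.
apply: (@le_trans _ _ ((2 * c * s2 * L) * K0^-1 * Num.sqrt (2 * pi * s2) *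
   ((r%:R - c) * L)^-1)).
  apply: ler_pM.
  - by rewrite -mulrA mulr_ge0.
  - by rewrite mulr_ge0 ?expR_ge0.
  - by rewrite -[leLHS]mulrA -[leRHS]mulrA; apply: ler_wpM2r.
  apply: le_trans e2; rewrite ler_wpM2r ?expR_ge0 //.
rewrite le_eqVlt; apply/orP; left; apply/eqP; field.
by rewrite !gt_eqF.
Qed.
Lemma poly_bound (R : realType) (p : {poly R}) x : 1 <= x ->
  `|p.[x]| <= (\sum_(i < size p) `|p`_i|) * x ^+ size p.
Proof.
move=> x1; have x0 : 0 <= x by apply: le_trans x1.
rewrite horner_coef mulr_suml; apply: le_trans (ler_norm_sum _ _ _) _.
apply: ler_sum => i _; rewrite normrM ler_wpM2l // ger0_norm ?exprn_ge0 //.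
by apply: ler_weXn2l => //; apply: ltnW.
Qed.

Definition Bp {R : realType} (Poly : nat -> {poly R}) r :=
  \sum_(1 <= p < r.+1) \sum_(i < size (Poly p)) `|(Poly p)`_i|.
Definition Dp {R : realType} (Poly : nat -> {poly R}) r :=
  (\max_(1 <= p < r.+1) size (Poly p))%N.

Lemma Bp_ge0 (R : realType) (Poly : nat -> {poly R}) r : 0 <= Bp Poly r.
Proof. by apply: sumr_ge0 => p _; apply: sumr_ge0 => i _. Qed.

Lemma sum_bound (R : realType) (Poly : nat -> {poly R}) r (s x nx : R) :
  1 <= s -> 1 <= x -> 0 <= nx ->
  `|\sum_(1 <= p < r.+1) s ^- p * (Poly p).[x] * nx| <=
    s^-1 * Bp Poly r * x ^+ Dp Poly r * nx.
Proof.
move=> s1 x1 n0.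
have s0 : 0 < s by apply: lt_le_trans s1.
have x0 : 0 <= x by apply: le_trans x1.
apply: le_trans (ler_norm_sum _ _ _) _.
rewrite /Bp mulr_sumr !mulr_suml; apply: ler_sum_nat => p /andP[p1 pr].
rewrite !normrM (ger0_norm n0) (@ger0_norm _ (s ^- p)); last by rewrite invr_ge0 exprn_ge0 // ltW.
apply: ler_wpM2r => //; rewrite -mulrA; apply: ler_pM.
- by rewrite invr_ge0 exprn_ge0 ?ltW.
- by [].
- by rewrite lef_pV2 ?posrE ?exprn_gt0 // ler_eXnr.
apply: le_trans (@poly_bound _ (Poly p) _ x1) _; apply: ler_wpM2l.
  by apply: sumr_ge0.
apply: ler_weXn2l => //; rewrite /Dp.
by apply: leq_bigmax_seq => //; rewrite mem_index_iota p1.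
Qed.

Definition K0 {R : realType} (s2 : R) := expR (- 3 / (2 * s2)).
Definition C1 {R : realType} (s2 c : R) (r : nat) (Poly : nat -> {poly R}) :=
  Bp Poly r * (2 * c * s2) ^+ (Dp Poly r).+1 * ((Dp Poly r).+2)`!%:R / K0 s2.
Definition C2 {R : realType} (s2 c : R) (r : nat) :=
  2 * c * s2 * Num.sqrt (2 * pi * s2) / (K0 s2 * (r%:R - c)).

Lemma core (R : realType) (s2 c : R) (r : nat) (Poly : nat -> {poly R}) (n F x eps : R) :
  0 < s2 -> 0 < c -> c < r%:R -> expR 2 <= n -> 1 <= x ->
  x <= Num.sqrt (c * s2 * ln n) -> 0 < eps ->
  `|F - gauss_N s2 x - \sum_(1 <= p < r.+1) (Num.sqrt n) ^- p * (Poly p).[x] * gauss_n s2 x|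
    <= eps * (Num.sqrt n) ^- r ->
  `|1 - (1 - F) / (1 - gauss_N s2 x)| <= C1 s2 c r Poly / (ln n / 2) + eps * C2 s2 c r.
Proof.
move=> s0 c0 cr n2 x1 xb e0 HE.
have n0 : 0 < n by apply: lt_le_trans n2; rewrite expR_gt0.
set s := Num.sqrt n in HE *.
have sp : 0 < s by rewrite sqrtr_gt0.
have lnE : ln n / 2 = ln s.
  have -> : n = s ^+ 2 by rewrite sqr_sqrtr ?ltW.
  by rewrite lnXn // -mulr_natr; field.
have ln2 : 2 <= ln n.
  have : ln (expR 2) <= ln n by rewrite ler_ln ?posrE ?expR_gt0.
  by rewrite expRK.
have L1 : 1 <= ln s by rewrite -lnE ler_pdivlMr //; lra.
have sE : s = expR (ln s) by rewrite lnK.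
have s1 : 1 <= s by rewrite sE; apply: le_trans (expR_ge1Dx _); lra.
have x0 : 0 <= x by apply: le_trans x1.
have xp : 0 < x by apply: lt_le_trans x1.
have x2 : x ^+ 2 <= 2 * c * s2 * ln s.
  have h : x ^+ 2 <= (Num.sqrt (c * s2 * ln n)) ^+ 2.
    by rewrite ler_pXn2r ?nnegrE ?sqrtr_ge0.
  rewrite sqr_sqrtr in h; last by rewrite !mulr_ge0 ?ltW //; lra.
  rewrite -lnE; lra.
have K00 : 0 < K0 s2 by rewrite /K0 expR_gt0.
have nx0 : 0 < gauss_n s2 x by apply: gauss_n_gt0.
have Tlb := @gauss_tail_lb _ s2 x s0 x1.
set G := gauss_N s2 x in HE Tlb *.
set nx := gauss_n s2 x in HE Tlb nx0 *.
have T0 : 0 < 1 - G.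
  apply: (lt_le_trans _ Tlb); apply: divr_gt0 => //; apply: mulr_gt0 => //; exact: expR_gt0.
have Tinv : (1 - G)^-1 <= x / (K0 s2 * nx).
  have <- : (K0 s2 * nx / x)^-1 = x / (K0 s2 * nx) by rewrite invf_div.
  rewrite lef_pV2 ?posrE //; apply: divr_gt0 => //; exact: mulr_gt0.
set S := \sum_(1 <= p < r.+1) _ in HE.
have -> : 1 - (1 - F) / (1 - G) = (S + (F - G - S)) * (1 - G)^-1.
  by field; rewrite gt_eqF.
rewrite mulrDl; apply: le_trans (ler_normD _ _) _.
have Ti0 : 0 <= (1 - G)^-1 by rewrite invr_ge0 ltW.
rewrite !normrM (ger0_norm Ti0).
apply: lerD.
  apply: (@le_trans _ _ (s^-1 * Bp Poly r * x ^+ Dp Poly r * nx * (x / (K0 s2 * nx)))).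
    apply: ler_pM => //.
    by rewrite /S; apply: sum_bound => //; apply: ltW.
  have -> : s^-1 * Bp Poly r * x ^+ Dp Poly r * nx * (x / (K0 s2 * nx)) =
     s^-1 * Bp Poly r * x ^+ (Dp Poly r).+1 / K0 s2.
    by rewrite exprSr; field; rewrite !gt_eqF.
  rewrite lnE /C1.
  apply: part1 => //; first exact: Bp_ge0.
  by rewrite !mulr_gt0.
apply: (@le_trans _ _ (eps * s ^- r * (x / (K0 s2 * nx)))).
  by apply: ler_pM => //; rewrite invr_ge0 ltW.
rewrite -mulrA ler_pM2l //.
by rewrite /C2 /nx mulrC; apply: (@part2 _ s (ln s)).
Qed.

Theorem proposition5p3 (d : measure_display) (T : measurableType d) (R : realType)
  (P : probability T R) (X : nat -> {RV P >-> R}) (A sigma2 : R) (r : nat)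
  (Poly : nat -> {poly R}) :
  0 < sigma2 ->
  has_edgeworth_expansion P (fun n => X n : T -> R) A sigma2 r Poly ->
  forall c : R, 0 < c -> c < r%:R ->
  forall x : nat -> R,
    (\forall N \near \oo, 1 <= x N /\ x N <= Num.sqrt (c * sigma2 * ln (N%:R))) ->
    (fun N => (1 - normalized_cdf P (fun n => X n : T -> R) A N (x N))
              / (1 - gauss_N sigma2 (x N))) @ \oo --> (1 : R).
Proof.
move=> s0 HE c c0 cr x Hx.
apply/cvgrPdist_le => e e0.
have d0 : 0 < r%:R - c by rewrite subr_gt0.
have K00 : 0 < K0 sigma2 by rewrite /K0 expR_gt0.
have C2p : 0 < C2 sigma2 c r.
  rewrite /C2; apply: divr_gt0; last exact: mulr_gt0.
  apply: mulr_gt0; first by rewrite !mulr_gt0.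
  by rewrite sqrtr_gt0 !mulr_gt0 ?pi_gt0.
have C1p : 0 <= C1 sigma2 c r Poly.
  rewrite /C1; apply: mulr_ge0; last by rewrite invr_ge0 ltW.
  apply: mulr_ge0; last exact: ler0n.
  apply: mulr_ge0; first exact: Bp_ge0.
  by apply: exprn_ge0; rewrite !mulr_ge0 // ltW.
set eps := e / (2 * C2 sigma2 c r).
have eps0 : 0 < eps by apply: divr_gt0 => //; apply: mulr_gt0.
have HEn := HE eps eps0.
near=> N.
have [x1 xb] : 1 <= x N /\ x N <= Num.sqrt (c * sigma2 * ln (N%:R)) by near: N.
have hN : expR 2 <= N%:R :> R by near: N; exact: nbhs_infty_ger.
have hN2 : expR (4 * C1 sigma2 c r Poly / e) <= N%:R :> R by near: N; exact: nbhs_infty_ger.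
have hE : forall z : R,
    `| normalized_cdf P (fun n => X n : T -> R) A N z - gauss_N sigma2 z
       - \sum_(1 <= p < r.+1) (Num.sqrt (N%:R : R)) ^- p * (Poly p).[z] * gauss_n sigma2 z |
    <= eps * (Num.sqrt (N%:R : R)) ^- r by near: N; exact: HEn.
have := @core _ sigma2 c r Poly N%:R (normalized_cdf P (fun n => X n : T -> R) A N (x N)) (x N) eps s0 c0 cr hN x1 xb eps0 (hE (x N)).
move=> /le_trans; apply.
have n0 : 0 < N%:R :> R by apply: lt_le_trans hN; rewrite expR_gt0.
have ln2 : 2 <= ln (N%:R : R).
  have : ln (expR 2) <= ln (N%:R : R) by rewrite ler_ln ?posrE ?expR_gt0.
  by rewrite expRK.
have lnb : 4 * C1 sigma2 c r Poly / e <= ln (N%:R : R).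
  have : ln (expR (4 * C1 sigma2 c r Poly / e)) <= ln (N%:R : R).
    by rewrite ler_ln ?posrE ?expR_gt0.
  by rewrite expRK.
have -> : eps * C2 sigma2 c r = e / 2 by rewrite /eps; field; rewrite gt_eqF.
have : C1 sigma2 c r Poly / (ln (N%:R : R) / 2) <= e / 2.
  rewrite ler_pdivrMr ?divr_gt0 //; last by lra.
  rewrite ler_pdivrMr // in lnb.
  lra.
lra.
Unshelve. all: by end_near.
Qed.
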